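(* Let $r$ be a positive integer and let $(P,\mathcal{L})$ be an intersecting linear system of rank $r$ satisfying $\tau(P,\mathcal{L})=\nu_2(P,\mathcal{L})=r$. Then $(P,\mathcal{L})$ is $r$-uniform, i.e., every line has exactly $r$ points.
   Context: A linear system is a pair $(P,\mathcal{L})$ with $P$ a finite set of points and $\mathcal{L}$ a family of subsets of $P$ (lines) such that any two distinct lines share at most one point; it is intersecting if any two distinct lines share exactly one point. The rank is the maximum cardinality of a line. A transversal is a set of points meeting every line; $\tau$ is the minimum size of a transversal. A 2-packing is a set of lines no three of which share a common point; $\nu_2$ is its maximum size. *)

(* Defs.v *)
From mathcomp Require Import all_boot.
Set Implicit Arguments. Unset Strict Implicit. Unset Printing Implicit Defensive.

(* A linear system: points = finite type T, lines = a family L of subsets of T. *)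
Definition linear_system (T : finType) (L : {set {set T}}) : Prop :=
  forall l1 l2, l1 \in L -> l2 \in L -> l1 != l2 -> #|l1 :&: l2| <= 1.

Definition intersecting (T : finType) (L : {set {set T}}) : Prop :=
  forall l1 l2, l1 \in L -> l2 \in L -> l1 != l2 -> #|l1 :&: l2| = 1.

Definition has_rank (T : finType) (L : {set {set T}}) (r : nat) : Prop :=
  (exists2 l, l \in L & #|l| = r) /\ (forall l, l \in L -> #|l| <= r).

Definition transversal (T : finType) (L : {set {set T}}) (S : {set T}) : Prop :=
  forall l, l \in L -> exists2 x, x \in S & x \in l.

Definition tau_eq (T : finType) (L : {set {set T}}) (k : nat) : Prop :=
  (exists2 S, transversal L S & #|S| = k) /\
  (forall S, transversal L S -> k <= #|S|).

Definition two_packing (T : finType) (L : {set {set T}}) (Q : {set {set T}}) : Prop :=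
  Q \subset L /\
  forall l1 l2 l3, l1 \in Q -> l2 \in Q -> l3 \in Q ->
    l1 != l2 -> l1 != l3 -> l2 != l3 -> l1 :&: l2 :&: l3 = set0.

Definition nu2_eq (T : finType) (L : {set {set T}}) (k : nat) : Prop :=
  (exists2 Q, two_packing L Q & #|Q| = k) /\
  (forall Q, two_packing L Q -> #|Q| <= k).

(* Main.v *)
Require Import Defs.
From mathcomp Require Import all_boot.

Theorem lemma4p1 (T : finType) (L : {set {set T}}) (r : nat) :
  0 < r ->
  linear_system L -> intersecting L -> has_rank L r ->
  tau_eq L r -> nu2_eq L r ->
  forall l, l \in L -> #|l| = r.
Proof.
move=> _ _ Hint [_ Hrk] [[S HS _] Hmin] _ l Hl.
have Tl : Defs.transversal L l.
  move=> l2 Hl2; case: (eqVneq l2 l) => [->|ne].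
    by have [x _ xl] := HS l Hl; exists x.
  have /eqP/cards1P [x Hx] := Hint l2 l Hl2 Hl ne.
  have : x \in l2 :&: l by rewrite Hx set11.
  by rewrite inE => /andP[xl2 xl]; exists x.
by apply/eqP; rewrite eqn_leq Hrk // Hmin.
Qed.
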